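(* Let $q$ be a prime power, $\beta$ a primitive element of $\mathbb{F}_{q^2}$, $\mathrm{Tr}(x)=x+x^q$, and $\Psi:\mathbb{F}_{q^2}^n\to\mathbb{F}_q^{2n}$, $\Psi(\alpha_0,\ldots,\alpha_{n-1})=\left(\mathrm{Tr}(\beta\alpha_0),\ldots,\mathrm{Tr}(\beta\alpha_{n-1}),\mathrm{Tr}(\beta^q\alpha_0),\ldots,\mathrm{Tr}(\beta^q\alpha_{n-1})\right)$. Let $g(x)\in\mathbb{F}_q[x]$ be a monic divisor of $x^{2n}-1$ with $g(x)\neq x^{2n}-1$ and $k=\deg g$, let $\mathscr{D}=\langle g(x)\rangle$ be the $q$-ary linear cyclic code of length $2n$ it generates, and $\mathscr{C}=\Psi^{-1}(\mathscr{D})$. Let $h(x)=(x^{2n}-1)/g(x)=h_0+\cdots+h_{2n-k}x^{2n-k}$, $h^*(x)=\frac{1}{h_{2n-k}}x^{2n-k}h(1/x)$, and $V_{h^*(x)}\in\mathbb{F}_q^{2n}$ its coefficient vector. Then the $k$ vectors $\Psi^{-1}(\tau(\sigma^{i}(V_{h^*(x)})))$, $0\le i\le k-1$, form an $\mathbb{F}_q$-basis of the alternating dual $\mathscr{C}^{\perp_a}$ (i.e., they are the rows of an additive generator matrix of $\mathscr{C}^{\perp_a}$).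
   Context: $\sigma(v_0,\ldots,v_{2n-1})=(v_{2n-1},v_0,\ldots,v_{2n-2})$ and $\tau(v_0,\ldots,v_{2n-1})=(-v_n,\ldots,-v_{2n-1},v_0,\ldots,v_{n-1})$. The alternating inner product on $\mathbb{F}_{q^2}^n$ is $\langle u,v\rangle_a=(\beta^{2q}-\beta^2)\sum_{i=0}^{n-1}(u_iv_i^q-u_i^qv_i)$ and $\mathscr{C}^{\perp_a}=\{v\in\mathbb{F}_{q^2}^n:\langle u,v\rangle_a=0\ \forall u\in\mathscr{C}\}$. Vectors of $\mathbb{F}_q^{2n}$ are identified with polynomials of degree $<2n$ modulo $x^{2n}-1$. *)

(* Defs.v *)
From HB Require Import structures.
From mathcomp Require Import all_boot all_order all_algebra all_field.
Set Implicit Arguments. Unset Strict Implicit. Unset Printing Implicit Defensive.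
Import GRing.Theory.
Local Open Scope ring_scope.

(* F_{q^2} is modelled as a finite field L with #|L| = q^2; F_q is the
   subfield {x | x^q = x} of L.  Vectors of F_q^m are rows 'rV[L]_m whose
   entries lie in F_q. *)

Definition inFq (L : fieldType) (q : nat) (x : L) : bool := x ^+ q == x.

Definition vget (R : nzRingType) (m : nat) (v : 'rV[R]_m) (j : nat) : R :=
  match @insub nat (fun j => j < m)%N 'I_m j with
  | Some i => v 0 i | None => 0 end.

Definition Tr (L : fieldType) (q : nat) (x : L) : L := x + x ^+ q.

Definition Psi (L : fieldType) (q n : nat) (beta : L) (a : 'rV[L]_n)
  : 'rV[L]_(2 * n) :=
  \row_(j < 2 * n) (if (j < n)%N then Tr q (beta * vget a j)
                    else Tr q (beta ^+ q * vget a (j - n))).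

Definition sigma (R : nzRingType) (m : nat) (v : 'rV[R]_m) : 'rV[R]_m :=
  \row_(j < m) vget v ((j + m - 1) %% m).

Definition tau (R : nzRingType) (n : nat) (v : 'rV[R]_(2 * n)) : 'rV[R]_(2 * n) :=
  \row_(j < 2 * n) (if (j < n)%N then - vget v (j + n) else vget v (j - n)).

Definition vpoly (R : nzRingType) (m : nat) (v : 'rV[R]_m) : {poly R} :=
  \poly_(j < m) vget v j.

Definition inD (L : fieldType) (q n : nat) (g : {poly L}) (v : 'rV[L]_(2 * n)) : Prop :=
  (forall j, inFq q (v 0 j)) /\
  exists a : {poly L}, (forall i, inFq q a`_i) /\
    vpoly v = (a * g) %% ('X^(2 * n) - 1).

Definition inC (L : fieldType) (q n : nat) (beta : L) (g : {poly L}) (u : 'rV[L]_n) : Prop :=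
  inD q g (Psi q beta u).

Definition altip (L : fieldType) (q n : nat) (beta : L) (u v : 'rV[L]_n) : L :=
  (beta ^+ (2 * q) - beta ^+ 2) *
    \sum_(i < n) (u 0 i * v 0 i ^+ q - u 0 i ^+ q * v 0 i).

Definition altdual (L : fieldType) (q n : nat) (beta : L) (g : {poly L}) (v : 'rV[L]_n) : Prop :=
  forall u, inC q beta g u -> altip q beta u v = 0.

Definition hpoly (L : fieldType) (n : nat) (g : {poly L}) : {poly L} :=
  ('X^(2 * n) - 1) %/ g.

Definition hstar (L : fieldType) (n : nat) (g : {poly L}) : {poly L} :=
  let h := hpoly n g in
  let d := (size h).-1 in
  (lead_coef h)^-1 *: \poly_(j < d.+1) h`_(d - j).

Definition Vhstar (L : fieldType) (n : nat) (g : {poly L}) : 'rV[L]_(2 * n) :=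
  \row_(j < 2 * n) (hstar n g)`_j.

Definition Fq_basis (L : fieldType) (q n k : nat) (S : 'rV[L]_n -> Prop)
  (ws : 'I_k -> 'rV[L]_n) : Prop :=
  [/\ forall i, S (ws i),
      forall c : 'I_k -> L, (forall i, inFq q (c i)) ->
        \sum_(i < k) c i *: ws i = 0 -> forall i, c i = 0 &
      forall v, S v -> exists c : 'I_k -> L,
        (forall i, inFq q (c i)) /\ v = \sum_(i < k) c i *: ws i].

(* Main.v *)
Require Import Defs.
From HB Require Import structures.
From mathcomp Require Import all_boot all_order all_algebra all_field.
From mathcomp Require Import zify ring.
Set Implicit Arguments. Unset Strict Implicit. Unset Printing Implicit Defensive.
Import GRing.Theory.
Local Open Scope ring_scope.

Section Frob.
Variables (L : finFieldType) (q : nat).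
Hypothesis hq : [pchar L].-nat q.
Hypothesis hcard : #|L| = (q ^ 2)%N.

Definition fq (x : L) := x ^+ q.

Lemma q_gt0 : (0 < q)%N.
Proof. by move: hq => /andP[]. Qed.

Lemma fq_is_nmod : nmod_morphism fq.
Proof.
split; first by rewrite /fq expr0n; case: q q_gt0.
by move=> x y; rewrite /fq exprDn_pchar.
Qed.
Lemma fq_is_monoid : monoid_morphism fq.
Proof. by split=> [|x y]; rewrite /fq ?expr1n ?exprMn. Qed.

HB.instance Definition _ := GRing.isNmodMorphism.Build L L fq fq_is_nmod.
HB.instance Definition _ := GRing.isMonoidMorphism.Build L L fq fq_is_monoid.

Lemma fqK (x : L) : (x ^+ q) ^+ q = x.
Proof. by rewrite -exprM mulnn -hcard expf_card. Qed.

Lemma fqD (x y : L) : (x + y) ^+ q = x ^+ q + y ^+ q.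
Proof. exact: (rmorphD fq). Qed.
Lemma fqN (x : L) : (- x) ^+ q = - x ^+ q.
Proof. exact: (rmorphN fq). Qed.
Lemma fqB (x y : L) : (x - y) ^+ q = x ^+ q - y ^+ q.
Proof. exact: (rmorphB fq). Qed.
Lemma fq_sum I r (P : pred I) (F : I -> L) :
  (\sum_(i <- r | P i) F i) ^+ q = \sum_(i <- r | P i) F i ^+ q.
Proof. exact: (rmorph_sum fq). Qed.

Lemma inFq0 : inFq q (0 : L). Proof. by rewrite /inFq -/(fq 0) rmorph0. Qed.
Lemma inFq1 : inFq q (1 : L). Proof. by rewrite /inFq expr1n. Qed.
Lemma inFqD (x y : L) : inFq q x -> inFq q y -> inFq q (x + y).
Proof. by rewrite /inFq fqD => /eqP-> /eqP->. Qed.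
Lemma inFqN (x : L) : inFq q x -> inFq q (- x).
Proof. by rewrite /inFq fqN => /eqP->. Qed.
Lemma inFqM (x y : L) : inFq q x -> inFq q y -> inFq q (x * y).
Proof. by rewrite /inFq exprMn => /eqP-> /eqP->. Qed.
Lemma inFqV (x : L) : inFq q x -> inFq q (x^-1).
Proof. by rewrite /inFq exprVn => /eqP->. Qed.
Lemma inFq_nat m : inFq q (m%:R : L).
Proof. by rewrite /inFq -/(fq _) rmorph_nat. Qed.

Lemma map_fq_id (p : {poly L}) : (forall i, inFq q p`_i) -> map_poly fq p = p.
Proof. by move=> H; apply/polyP=> i; rewrite coef_map /fq; apply/eqP/H. Qed.

Lemma Fq_div (A B C : {poly L}) : A != 0 -> A * B = C ->
  (forall i, inFq q A`_i) -> (forall i, inFq q C`_i) -> forall i, inFq q B`_i.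
Proof.
move=> nzA eAB hA hC.
have: A * map_poly fq B = A * B.
  by rewrite -{1}(map_fq_id hA) -rmorphM /= eAB map_fq_id.
move/(mulfI nzA) => e i; apply/eqP.
by rewrite -[in RHS]e coef_map.
Qed.
End Frob.

Section Vget.
Variable (L : nzRingType) (m : nat).
Implicit Types v w : 'rV[L]_m.

Lemma vget_lt v j (hj : (j < m)%N) : vget v j = v 0 (Ordinal hj).
Proof. by rewrite /vget insubT. Qed.
Lemma vgetE v (i : 'I_m) : vget v i = v 0 i.
Proof. by rewrite (vget_lt v (ltn_ord i)); congr (v 0 _); apply: val_inj. Qed.
Lemma vget_ge v j : (m <= j)%N -> vget v j = 0.
Proof. by move=> hj; rewrite /vget insubF // ltnNge hj. Qed.
Lemma vget_row (E : nat -> L) j :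
  vget (\row_(i < m) E i) j = if (j < m)%N then E j else 0.
Proof.
case: ltnP => hj; last exact: vget_ge.
by rewrite (vget_lt _ hj) mxE.
Qed.
Lemma vget_eq v w : (forall j, (j < m)%N -> vget v j = vget w j) -> v = w.
Proof. by move=> H; apply/rowP => i; rewrite -!vgetE H. Qed.
Lemma vgetD v w j : vget (v + w) j = vget v j + vget w j.
Proof. case: (ltnP j m) => hj; last by rewrite !vget_ge ?addr0.
by rewrite !(vget_lt _ hj) mxE. Qed.
Lemma vgetZ c v j : vget (c *: v) j = c * vget v j.
Proof. case: (ltnP j m) => hj; last by rewrite !vget_ge ?mulr0.
by rewrite !(vget_lt _ hj) mxE. Qed.
Lemma vget0 j : vget (0 : 'rV[L]_m) j = 0.
Proof. case: (ltnP j m) => hj; last by rewrite !vget_ge.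
by rewrite !(vget_lt _ hj) mxE. Qed.
Lemma vget_sum I (r : seq I) (P : pred I) (F : I -> 'rV[L]_m) j :
  vget (\sum_(i <- r | P i) F i) j = \sum_(i <- r | P i) vget (F i) j.
Proof.
elim/big_rec2: _ => [|i y1 y2 _ <-]; first exact: vget0.
by rewrite vgetD.
Qed.
Lemma coef_vpoly v j : (vpoly v)`_j = vget v j.
Proof. rewrite coef_poly; case: ltnP => // hj; by rewrite vget_ge. Qed.
Lemma vget_sigma v j : (j < m)%N -> vget (sigma v) j = vget v ((j + m - 1) %% m).
Proof. by move=> hj; rewrite /sigma (vget_lt _ hj) mxE. Qed.
End Vget.

Lemma vget_Psi (L : fieldType) q n beta (u : 'rV[L]_n) j :
  vget (Psi q beta u) j = if (j < n)%N then Tr q (beta * vget u j)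
     else if (j < 2 * n)%N then Tr q (beta ^+ q * vget u (j - n)) else 0.
Proof.
case: (ltnP j (2 * n)) => h2; last by rewrite vget_ge // ifF //; apply/negbTE; rewrite -leqNgt; lia.
by rewrite /Psi (vget_lt _ h2) mxE /=; case: ltnP.
Qed.

Lemma vget_tau (L : fieldType) n (w : 'rV[L]_(2 * n)) j :
  vget (tau w) j = if (j < n)%N then - vget w (j + n)
     else if (j < 2 * n)%N then vget w (j - n) else 0.
Proof.
case: (ltnP j (2 * n)) => h2; last by rewrite vget_ge // ifF //; apply/negbTE; rewrite -leqNgt; lia.
by rewrite /tau (vget_lt _ h2) mxE /=; case: ltnP.
Qed.

Lemma sum_shift (R : nmodType) n (F : nat -> R) :
  \sum_(n <= i < 2 * n) F i = \sum_(0 <= i < n) F (i + n)%N.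
Proof.
rewrite -{1}[n]add0n big_addn.
by have -> : (2 * n - n = n)%N by lia.
Qed.

Section PsiFacts.
Variables (L : finFieldType) (q n : nat) (beta : L).
Hypothesis hq : [pchar L].-nat q.
Hypothesis hcard : #|L| = (q ^ 2)%N.
Hypothesis hd : beta ^+ (2 * q) != beta ^+ 2.

Local Notation B := (beta ^+ q).
Local Notation Fq := (@inFq L q).
Implicit Types x y a b c s t : L.

Lemma B2 : beta ^+ (2 * q) = B ^+ 2.
Proof. by rewrite mulnC exprM. Qed.

Lemma Tr_Fq x : Fq (Tr q x).
Proof. by rewrite /inFq /Tr fqD // fqK // addrC. Qed.
Lemma TrZ c x : Fq c -> Tr q (c * x) = c * Tr q x.
Proof. by rewrite /Tr exprMn => /eqP->; rewrite mulrDr. Qed.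
Lemma TrD x y : Tr q (x + y) = Tr q x + Tr q y.
Proof. by rewrite /Tr fqD //; ring. Qed.
Lemma Tr_b x : Tr q (beta * x) = beta * x + B * x ^+ q.
Proof. by rewrite /Tr exprMn. Qed.
Lemma Tr_B x : Tr q (B * x) = B * x + beta * x ^+ q.
Proof. by rewrite /Tr exprMn fqK. Qed.

Lemma key_id a b :
  - Tr q (beta * a) * Tr q (B * b) + Tr q (B * a) * Tr q (beta * b)
  = (beta ^+ (2 * q) - beta ^+ 2) * (a * b ^+ q - a ^+ q * b).
Proof. rewrite !Tr_b !Tr_B B2; ring. Qed.

Lemma nzD : beta ^+ 2 - B ^+ 2 != 0.
Proof. by rewrite subr_eq0 eq_sym -B2. Qed.

Lemma Tr_kernel a : Tr q (beta * a) = 0 -> Tr q (B * a) = 0 -> a = 0.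
Proof.
rewrite Tr_b Tr_B => e1 e2.
have : (beta ^+ 2 - B ^+ 2) * a = beta * (beta * a + B * a ^+ q) - B * (B * a + beta * a ^+ q).
  by ring.
rewrite e1 e2 !mulr0 subrr => /eqP; rewrite mulf_eq0 (negbTE nzD) /= => /eqP.
done.
Qed.

Lemma Tr_surj s t : Fq s -> Fq t ->
  exists a, Tr q (beta * a) = s /\ Tr q (B * a) = t.
Proof.
move=> /eqP hs /eqP ht.
set D := beta ^+ 2 - B ^+ 2.
exists ((beta * s - B * t) / D).
have hD : D != 0 := nzD.
have eq : ((beta * s - B * t) / D) ^+ q = (B * s - beta * t) / (B ^+ 2 - beta ^+ 2).
  by rewrite exprMn exprVn fqB // !exprMn fqK // hs ht fqB // -!exprM !(mulnC 2%N) !exprM fqK.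
have hD' : B ^+ 2 - beta ^+ 2 != 0 by rewrite subr_eq0 eq_sym -subr_eq0.
rewrite Tr_b Tr_B eq; split; rewrite /D; field; by rewrite ?hD ?hD'.
Qed.

Local Notation Psi := (@Psi L q n beta).

Lemma Psi_lin c u v : Fq c -> Psi (c *: u + v) = c *: Psi u + Psi v.
Proof.
move=> hc; apply: vget_eq => j hj.
rewrite vgetD vgetZ !vget_Psi !vgetD !vgetZ.
case: ifP => _; first by rewrite mulrDr mulrCA TrD TrZ.
case: ifP => _; last by rewrite mulr0 addr0.
by rewrite mulrDr mulrCA TrD TrZ.
Qed.

Lemma Tr0 : Tr q (0 : L) = 0.
Proof. by rewrite /Tr expr0n; case: q (q_gt0 hq) => // ? _; rewrite addr0. Qed.

Lemma Psi0 : Psi 0 = 0.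
Proof.
apply: vget_eq => j hj; rewrite vget0 vget_Psi !vget0 !mulr0 Tr0.
by case: ifP => //; case: ifP.
Qed.

Lemma Psi_sum k (c : 'I_k -> L) (w : 'I_k -> 'rV[L]_n) : (forall i, Fq (c i)) ->
  Psi (\sum_(i < k) c i *: w i) = \sum_(i < k) c i *: Psi (w i).
Proof.
move=> hc; elim/big_rec2: _ => [|i y1 y2 _ <-]; first exact: Psi0.
exact: Psi_lin.
Qed.

Lemma Psi_inj u v : Psi u = Psi v -> u = v.
Proof.
move=> e; apply/eqP; rewrite -subr_eq0; apply/eqP.
have e0 : Psi (u - v) = 0.
  rewrite addrC -scaleN1r Psi_lin ?e ?scaleN1r ?addNr //.
  exact: (inFqN hq (inFq1 L q)).
apply/rowP => i; rewrite [RHS]mxE -vgetE.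
have h1 := vget_Psi q beta (u - v) i.
have h2 := vget_Psi q beta (u - v) (i + n).
rewrite e0 vget0 ltn_ord in h1.
rewrite e0 vget0 ifF ?addnK in h2; last by apply/negbTE; rewrite -leqNgt leq_addl.
rewrite ifT in h2; last by have := ltn_ord i; lia.
symmetry in h1; symmetry in h2. exact: Tr_kernel h1 h2.
Qed.

Lemma Psi_Fq u j : Fq (vget (Psi u) j).
Proof.
rewrite vget_Psi; case: ifP => _; first exact: Tr_Fq.
case: ifP => _; [exact: Tr_Fq | exact: inFq0].
Qed.

Lemma Psi_surj (w : 'rV[L]_(2 * n)) : (forall j, Fq (vget w j)) -> exists u, Psi u = w.
Proof.
move=> hw.
have [f hf] : exists f : 'I_n -> L, forall i,
    Tr q (beta * f i) = vget w i /\ Tr q (B * f i) = vget w (i + n).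
  apply: (@fin_all_exists _ (fun _ => L)
    (fun (i : 'I_n) (a : L) => Tr q (beta * a) = vget w i /\ Tr q (B * a) = vget w (i + n))) => i.
  exact: Tr_surj.
exists (\row_i f i); apply: vget_eq => j hj; rewrite vget_Psi.
case: (ltnP j n) => h1.
  by rewrite (vget_lt _ h1) mxE (hf (Ordinal h1)).1.
rewrite hj; have h3 : (j - n < n)%N by lia.
by rewrite (vget_lt _ h3) mxE (hf (Ordinal h3)).2 /= subnK.
Qed.

Lemma altip_dot u v : altip q beta u v =
  \sum_(0 <= j < 2 * n) vget (Psi u) j * vget (tau (Psi v)) j.
Proof.
rewrite (big_cat_nat _ (n := n)) //=; last by lia.
rewrite sum_shift.
rewrite -big_split /= /altip mulr_sumr big_mkord; apply: eq_bigr => i _.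
rewrite !vget_tau !vget_Psi ltn_ord ifF; last by apply/negbTE; rewrite -leqNgt leq_addl.
rewrite ifT; last by have := ltn_ord i; lia.
rewrite ifF; last by apply/negbTE; rewrite -leqNgt leq_addl.
rewrite ifT; last by have := ltn_ord i; lia.
rewrite addnK ltn_ord !vgetE -key_id.
rewrite ltnNge leq_addl /=.
have hi2 := ltn_ord i.
have -> : (i + n < 2 * n)%N by lia.
ring.
Qed.
End PsiFacts.


Ltac slia := repeat match goal with H : context[size _] |- _ => revert H end;
  repeat (match goal with |- context[size ?p] => let s := fresh "sz" in set s := size p; clearbody s end);
  intros; lia.

Lemma sum_lin (R : comNzRingType) N k (c : nat -> R) (A : nat -> nat -> R) (U : nat -> R) :
  (forall i, (i < k)%N -> \sum_(0 <= t < N) U t * A i t = 0) ->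
  \sum_(0 <= t < N) (\sum_(i < k) c i * A i t) * U t = 0.
Proof.
move=> H.
under eq_bigr => t _ do rewrite mulr_suml.
rewrite (exchange_big_dep xpredT) //=.
apply: big1 => i _.
under eq_bigr => t _ do rewrite -mulrA [A i t * _]mulrC.
by rewrite -mulr_sumr H ?mulr0.
Qed.

Section Poly.
Variables (L : fieldType) (n : nat) (g : {poly L}).
Hypothesis hn : (0 < n)%N.
Hypothesis gmon : g \is monic.
Hypothesis gdiv : g %| 'X^(2 * n) - 1.

Local Notation N := (2 * n)%N.
Local Notation h := (hpoly n g).
Variable k : nat.
Hypothesis size_g : size g = k.+1.
Local Notation m := (2 * n - k)%N.
Local Notation hs := (hstar n g).

Lemma sizeXN : size ('X^N - 1 : {poly L}) = N.+1.
Proof. by rewrite -polyC1 size_XnsubC //; lia. Qed.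

Lemma hg : h * g = 'X^N - 1.
Proof. exact: divpK. Qed.

Lemma g_nz : g != 0.
Proof. by apply: monic_neq0. Qed.

Lemma h_nz : h != 0.
Proof. apply/eqP => e; have := sizeXN; by rewrite -hg e mul0r size_poly0. Qed.


Lemma size_h : size h = m.+1 /\ (k <= N)%N.
Proof.
have := sizeXN; rewrite -hg size_mul ?h_nz ?g_nz // size_g addnS /= => e.
have := size_poly_gt0 h; rewrite h_nz => hp.
move: e hp; set a := size h => e hp. split; lia.
Qed.

Lemma lc_h : lead_coef h = 1.
Proof.
have := lead_coefXnsubC (R := L) 1 (_ : (0 < N)%N); rewrite polyC1 -hg lead_coefM.
by move/(_ (ltac:(lia))); rewrite (monicP gmon) mulr1.
Qed.

Lemma coef_hs j : hs`_j = if (j <= m)%N then h`_(m - j) else 0.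
Proof.
rewrite /hstar lc_h invr1 scale1r coef_poly (proj1 size_h) /=.
by [].
Qed.

Lemma hs_nz : hs != 0.
Proof.
apply/eqP => e; have := coef_hs 0; rewrite e coef0 leq0n subn0.
have := lc_h; rewrite /lead_coef (proj1 size_h) /= => -> /eqP.
by rewrite eq_sym oner_eq0.
Qed.

Lemma size_hs : (size hs <= m.+1)%N.
Proof.
apply/leq_sizeP => j hj; rewrite coef_hs ifF //; apply/negbTE; rewrite -ltnNge; lia.
Qed.

Lemma g0_nz : g`_0 != 0.
Proof.
apply/eqP => e; have := congr1 (fun p : {poly L} => p`_0) hg; rewrite /= coef0M e mulr0.
rewrite coefB coefXn coef1 (_ : (0 == N)%N = false) ?sub0r; last by lia.
by rewrite eqxx mulr1n => /esym /eqP; rewrite oppr_eq0 oner_eq0.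
Qed.

Lemma h_big t : (m < t)%N -> h`_t = 0.
Proof. by move=> ht; rewrite nth_default // (proj1 size_h). Qed.

Lemma orth (U : {poly L}) : (size U <= N)%N -> ('X^N - 1) %| U * h ->
  forall i, (i < k)%N -> \sum_(0 <= j < N) U`_j * ('X^i * hs)`_j = 0.
Proof.
move=> hU hdv i hi.
have hkN := proj2 size_h.
have step1 : \sum_(0 <= j < N) U`_j * ('X^i * hs)`_j = (U * h)`_(m + i).
  rewrite coefM (big_cat_nat _ (n := (m + i).+1)) //=; last by lia.
  rewrite [X in _ + X]big1_seq ?addr0; last first.
    move=> j; rewrite mem_index_iota => /andP[h1 h2].
    rewrite coefXnM ifF; last by apply/negbTE; rewrite -leqNgt; lia.
    by rewrite coef_hs ifF ?mulr0 //; apply/negbTE; rewrite -ltnNge; lia.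
  rewrite big_mkord; apply: eq_bigr => j _.
  rewrite coefXnM coef_hs; have hj := ltn_ord j.
  case: ltnP => h1.
    by rewrite h_big ?mulr0 //; lia.
  rewrite ifT; last by lia.
  by congr (_ * h`_ _); lia.
rewrite step1.
have [s hs'] := dvdpP _ _ hdv.
rewrite hs' mulrBr mulr1 coefB coefMXn ifT; last by lia.
have : (size s <= m)%N.
  have [->|snz] := eqVneq s 0; first by rewrite size_poly0.
  have := size_polyMleq U h; rewrite hs' size_mul ?snz // ?sizeXN.
    rewrite (proj1 size_h) !addnS /= => e; rewrite -(leq_add2r N); apply: leq_trans e _; by rewrite addnC leq_add2l.
  by rewrite -size_poly_eq0 sizeXN.
move=> hsz; rewrite nth_default ?subr0 ?oppr0 //; exact: leq_trans hsz (leq_addr _ _).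
Qed.

Lemma h0g0 : h`_0 * g`_0 = -1.
Proof.
have := congr1 (fun p : {poly L} => p`_0) hg; rewrite /= coef0M => ->.
rewrite coefB coefXn coef1 (_ : (0 == N)%N = false) ?eqxx ?sub0r //; lia.
Qed.

Lemma size_hs_eq : size hs = m.+1.
Proof.
apply/anti_leq; rewrite size_hs /=.
have : hs`_m != 0.
  rewrite coef_hs leqnn subnn; apply/eqP => e; have := h0g0; rewrite e mul0r.
  by move/eqP; rewrite eq_sym oppr_eq0 oner_eq0.
by apply: contraR; rewrite -leqNgt => H; rewrite nth_default.
Qed.

Lemma iter_sigma (P : {poly L}) i : (size P + i <= N)%N -> forall j,
  vget (iter i (@sigma L N) (\row_(t < N) P`_t)) j = ('X^i * P)`_j.
Proof.
elim: i => [|i IH] hP j.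
  rewrite /= vget_row expr0 mul1r; case: ltnP => // hj.
  by rewrite nth_default //; apply: leq_trans _ hj; rewrite -(addn0 (size P)).
have hP' : (size P + i <= N)%N by slia.
have {}IH := IH hP'.
case: (ltnP j N) => hj; last first.
  rewrite vget_ge // coefXnM ifF; last by apply/negbTE; rewrite -leqNgt; slia.
  by rewrite nth_default //; slia.
rewrite iterS vget_sigma // IH !coefXnM.
case: (posnP j) => [->|jpos].
  rewrite add0n modn_small; last by slia.
  rewrite ltn0Sn; case: ltnP => // _; rewrite nth_default //; slia.
have -> : ((j + N - 1) %% N = j - 1)%N.
  have -> : (j + N - 1 = (j - 1) + N * 1)%N by slia.
  by rewrite muln1 modnDr modn_small //; slia.
case: ltnP => h1; case: ltnP => h2 //; try slia.
by congr (P`_ _); slia.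
Qed.

Lemma Vhstar_row : Vhstar n g = \row_(t < N) hs`_t.
Proof. by []. Qed.

Lemma iter_Vh i : (i < k)%N -> forall j,
  vget (iter i (@sigma L N) (Vhstar n g)) j = ('X^i * hs)`_j.
Proof.
move=> hi; apply: iter_sigma; rewrite size_hs_eq.
have := proj2 size_h; slia.
Qed.

Lemma orthD (v : 'rV[L]_N) (a : {poly L}) : vpoly v = (a * g) %% ('X^N - 1) ->
  forall i, (i < k)%N ->
  \sum_(0 <= j < N) vget v j * vget (iter i (@sigma L N) (Vhstar n g)) j = 0.
Proof.
move=> hv i hi.
have hU : (size (vpoly v) <= N)%N by exact: size_poly.
have hdv : ('X^N - 1) %| vpoly v * h.
  apply/dvdpP; exists (a - (a * g) %/ ('X^N - 1) * h).
  have e : vpoly v = a * g - (a * g) %/ ('X^N - 1) * ('X^N - 1).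
    rewrite hv; set t := (a * g) %/ _; set r := (a * g) %% _.
    have E : a * g = t * ('X^N - 1) + r by exact: divp_eq.
    rewrite E; ring.
  by rewrite e -hg; ring.
rewrite -[RHS](orth hU hdv hi).
by apply: eq_bigr => j _; rewrite coef_vpoly iter_Vh.
Qed.

Lemma tri (r : {poly L}) : (size r <= m)%N ->
  (forall j, (j < m)%N -> \sum_(0 <= t < N) r`_t * ('X^j * g)`_t = 0) -> r = 0.
Proof.
move=> hr H; apply/eqP; apply: contraT => rnz.
have szr : (0 < size r)%N by rewrite size_poly_gt0.
set t0 := (size r).-1.
have ht0 : (t0 < m)%N by rewrite /t0; slia.
have := H t0 ht0.
rewrite (bigD1_seq t0) /=; last first.
- exact: iota_uniq.
- by rewrite mem_index_iota; have := proj2 size_h; slia.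
rewrite big1_seq ?addr0; last first.
  move=> t /andP[nt _]; rewrite coefXnM; case: ltnP => ht; first by rewrite mulr0.
  rewrite nth_default ?mul0r //; rewrite /t0 in ht nt.
  by move: ht nt; rewrite leq_eqVlt eq_sym => /orP[->//|]; slia.
rewrite coefXnM ltnn subnn => /eqP; rewrite mulf_eq0 (negbTE g0_nz) orbF.
have -> : r`_t0 = lead_coef r by [].
by rewrite lead_coef_eq0 (negbTE rnz).
Qed.

Lemma coef_Chs (c : nat -> L) t :
  ((\poly_(i < k) c i) * hs)`_t = \sum_(i < k) c i * ('X^i * hs)`_t.
Proof.
by rewrite poly_def mulr_suml coef_sum; apply: eq_bigr => i _; rewrite -scalerAl coefZ.
Qed.

Lemma size_Chs (c : nat -> L) : (size ((\poly_(i < k) c i) * hs)%R <= N)%N.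
Proof.
apply: leq_trans (size_polyMleq _ _) _; rewrite size_hs_eq.
have := size_poly k c; have := proj2 size_h; slia.
Qed.

Lemma span_hs (Y : {poly L}) : (size Y <= N)%N ->
  (forall j, (j < m)%N -> \sum_(0 <= t < N) Y`_t * ('X^j * g)`_t = 0) ->
  exists c : {poly L}, (size c <= k)%N /\ Y = c * hs.
Proof.
move=> hY H.
have hsnz := hs_nz.
set c := Y %/ hs; set r := Y %% hs.
have szc : (size c <= k)%N.
  rewrite /c size_divp // size_hs_eq /=; have := proj2 size_h; slia.
have cE : c = \poly_(i < k) c`_i.
  apply/polyP => t; rewrite coef_poly; case: ltnP => // ht.
  by rewrite nth_default //; exact: leq_trans szc ht.
have orthc : forall j, (j < m)%N -> \sum_(0 <= t < N) (c * hs)`_t * ('X^j * g)`_t = 0.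
  move=> j hj.
  have Hj : (size ('X^j * g)%R <= N)%N.
    apply: leq_trans (size_polyMleq _ _) _; rewrite size_polyXn size_g.
    have := proj2 size_h; slia.
  under eq_bigr => t _ do rewrite cE coef_Chs.
  apply: (@sum_lin L N k (fun i => c`_i) (fun i t => ('X^i * hs)`_t)
     (fun t => ('X^j * g)`_t)) => i hi; apply: (orth Hj) => //.
  by rewrite -hg mulrAC -mulrA dvdp_mull.
have hr : r = 0.
  apply: tri.
    have := ltn_modp Y hs; rewrite hsnz size_hs_eq ltnS; exact.
  move=> j hj.
  have e : r = Y - c * hs.
    by apply/eqP; rewrite eq_sym subr_eq addrC /c /r -divp_eq.
  have Hj := H j hj; rewrite e.
  under eq_bigr => t _ do rewrite coefB mulrBl.
  by rewrite sumrB orthc // Hj subr0.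
exists c; split => //.
by rewrite {1}(divp_eq Y hs) -/r hr addr0.
Qed.
End Poly.

Section TauLemmas.
Variables (L : fieldType) (n : nat).
Implicit Types w : 'rV[L]_(2 * n).

Lemma vgetN m (w : 'rV[L]_m) j : vget (- w) j = - vget w j.
Proof. by rewrite -scaleN1r vgetZ mulN1r. Qed.

Lemma tauK w : tau (tau w) = - w.
Proof.
apply: vget_eq => j hj; rewrite vgetN !vget_tau.
case: ltnP => h1.
  rewrite ifF; last by apply/negbTE; rewrite -leqNgt leq_addl.
  rewrite ifT; last by lia.
  by rewrite addnK.
rewrite hj ifT; last by lia.
by rewrite subnK.
Qed.

Lemma tau_lin a w w' : tau (a *: w + w') = a *: tau w + tau w'.
Proof.
apply: vget_eq => j hj; rewrite vgetD vgetZ !vget_tau !vgetD !vgetZ.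
case: ifP => _; first by rewrite opprD mulrN.
by case: ifP => _; rewrite ?mulr0 ?addr0.
Qed.

Lemma tau0 : tau (0 : 'rV[L]_(2 * n)) = 0.
Proof.
apply: vget_eq => j hj; rewrite vget0 vget_tau !vget0 oppr0.
by case: ifP => _ //; case: ifP.
Qed.

Lemma tau_sum k (c : 'I_k -> L) (w : 'I_k -> 'rV[L]_(2 * n)) :
  tau (\sum_(i < k) c i *: w i) = \sum_(i < k) c i *: tau (w i).
Proof.
elim/big_rec2: _ => [|i y1 y2 _ <-]; first exact: tau0.
exact: tau_lin.
Qed.
End TauLemmas.

Section Main.
Variables (L : finFieldType) (q n : nat) (beta : L) (g : {poly L}) (k : nat).
Hypothesis hq : [pchar L].-nat q.
Hypothesis hcard : #|L| = (q ^ 2)%N.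
Hypothesis hd : beta ^+ (2 * q) != beta ^+ 2.
Hypothesis hn : (0 < n)%N.
Hypothesis gmon : g \is monic.
Hypothesis gFq : forall i, inFq q g`_i.
Hypothesis gdiv : g %| 'X^(2 * n) - 1.
Hypothesis size_g : size g = k.+1.

Local Notation N := (2 * n)%N.
Local Notation V := (Vhstar n g).
Local Notation target := (fun i : nat => tau (iter i (@sigma L N) V)).
Local Notation Fq := (@inFq L q).

Lemma XN_Fq i : Fq ('X^N - 1 : {poly L})`_i.
Proof.
rewrite coefB coefXn coef1; apply: (inFqD hq); first exact: inFq_nat.
by apply: (inFqN hq); apply: inFq_nat.
Qed.

Lemma h_Fq i : Fq (hpoly n g)`_i.
Proof.
apply: (Fq_div hq (A := g) (C := 'X^N - 1)) => //.
- exact: monic_neq0.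
- by rewrite mulrC (hg gdiv).
- exact: XN_Fq.
Qed.

Lemma hs_Fq j : Fq (hstar n g)`_j.
Proof.
rewrite (coef_hs hn gmon gdiv size_g); case: ifP => _; [exact: h_Fq | exact: inFq0].
Qed.

Lemma iter_Fq i : (i < k)%N -> forall j, Fq (vget (iter i (@sigma L N) V) j).
Proof.
move=> hi j; rewrite (iter_Vh hn gmon gdiv size_g hi) coefXnM.
case: ifP => _; [exact: inFq0 | exact: hs_Fq].
Qed.

Lemma target_Fq i : (i < k)%N -> forall j, Fq (vget (target i) j).
Proof.
move=> hi j /=; rewrite vget_tau.
case: ifP => _; first by apply: (inFqN hq); apply: iter_Fq.
case: ifP => _; [exact: iter_Fq | exact: inFq0].
Qed.

Lemma part1 (i : 'I_k) : exists w : 'rV[L]_n, Psi q beta w = target i.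
Proof. exact: (Psi_surj hq hcard hd (target_Fq (ltn_ord i))). Qed.


Lemma part2_dual (ws : 'I_k -> 'rV[L]_n)
  (hws : forall i : 'I_k, Psi q beta (ws i) = target i) (i : 'I_k) :
  altdual q beta g (ws i).
Proof.
move=> u [hu [a [ha hv]]].
rewrite (altip_dot hq hcard hd) hws /= tauK.
under eq_bigr => j _ do rewrite vgetN mulrN.
by rewrite sumrN (orthD hn gmon gdiv size_g hv (ltn_ord i)) oppr0.
Qed.

Lemma cE (c : {poly L}) : (size c <= k)%N -> c = \poly_(i < k) c`_i.
Proof.
move=> szc; apply/polyP => t; rewrite coef_poly; case: ltnP => // ht.
by rewrite nth_default //; exact: leq_trans szc ht.
Qed.

Lemma part2_indep (ws : 'I_k -> 'rV[L]_n)
  (hws : forall i : 'I_k, Psi q beta (ws i) = target i) (c : 'I_k -> L) :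
  (forall i, Fq (c i)) -> \sum_(i < k) c i *: ws i = 0 -> forall i, c i = 0.
Proof.
move=> hc hsum.
have e0 : \sum_(i < k) c i *: target i = 0.
  have := Psi_sum beta hq ws hc; rewrite hsum (Psi0 n beta hq) => e; rewrite [RHS]e.
  by apply: eq_bigr => i _; rewrite hws.
have e1 : forall j, \sum_(i < k) c i * vget (target i) j = 0.
  move=> j; have := congr1 (fun w => vget w j) e0; rewrite /= vget_sum vget0 => e; rewrite -[RHS]e.
  by apply: eq_bigr => i _; rewrite vgetZ.
set C := \poly_(i < k) vget (\row_(i < k) c i) i.
have hC : C * hstar n g = 0.
  apply/polyP => t; rewrite coef0.
  case: (ltnP t N) => ht; last first.
    by rewrite nth_default //; apply: leq_trans (size_Chs hn gmon gdiv size_g _) ht.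
  rewrite coef_Chs.
  under eq_bigr => i _ do rewrite vgetE mxE -(iter_Vh hn gmon gdiv size_g (ltn_ord i)).
  case: (ltnP t n) => htn.
    have E := e1 (t + n)%N; rewrite -[RHS]E; apply: eq_bigr => i _.
    rewrite /= vget_tau ltnNge leq_addl /= addnK ifT //; lia.
  have E := e1 (t - n)%N.
  apply/eqP; rewrite -oppr_eq0 -sumrN; apply/eqP; rewrite -[RHS]E; apply: eq_bigr => i _.
  have htn' : (t - n < n)%N by lia.
  by rewrite /= vget_tau htn' subnK // mulrN.
move=> i.
have : C = 0.
  by move/eqP: hC; rewrite mulf_eq0 (negbTE (hs_nz hn gmon gdiv size_g)) orbF => /eqP.
move/(congr1 (fun p : {poly L} => p`_i)); rewrite coef0 coef_poly ltn_ord.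
by rewrite vgetE mxE.
Qed.

Lemma part2_span (ws : 'I_k -> 'rV[L]_n)
  (hws : forall i : 'I_k, Psi q beta (ws i) = target i) v :
  altdual q beta g v -> exists c : 'I_k -> L,
        (forall i, Fq (c i)) /\ v = \sum_(i < k) c i *: ws i.
Proof.
move=> hv.
set y := tau (Psi q beta v).
have yFq : forall t, Fq (vget y t).
  move=> t; rewrite vget_tau.
  case: ifP => _; first by apply: (inFqN hq); apply: Psi_Fq.
  case: ifP => _; [exact: Psi_Fq | exact: inFq0].
have hkN : (k <= N)%N := proj2 (size_h hn gmon gdiv size_g).
have Horth : forall j, (j < N - k)%N ->
    \sum_(0 <= t < N) (vpoly y)`_t * ('X^j * g)`_t = 0.
  move=> j hj; set P := 'X^j * g.
  have szP : (size P <= N)%N.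
    apply: leq_trans (size_polyMleq _ _) _; rewrite size_polyXn size_g /=; lia.
  have wFq : forall t, Fq (vget (\row_(t < N) P`_t) t).
    move=> t; rewrite vget_row; case: ifP => _; last exact: inFq0.
    rewrite coefXnM; case: ifP => _; [exact: inFq0 | exact: gFq].
  have [u hu] := Psi_surj hq hcard hd wFq.
  have vP : vpoly (\row_(t < N) P`_t) = P.
    apply/polyP => t; rewrite coef_vpoly vget_row; case: ltnP => // ht.
    by rewrite nth_default //; exact: leq_trans szP ht.
  have uC : inC q beta g u.
    split; first by move=> t; rewrite -vgetE; exact: Psi_Fq.
    exists 'X^j; split; first by move=> i; rewrite coefXn; exact: inFq_nat.
    rewrite hu vP modp_small // -polyC1 size_XnsubC ?ltnS //; lia.
  have := hv u uC; rewrite (altip_dot hq hcard hd) hu => E; rewrite -[RHS]E.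
  apply: eq_big_nat => t /andP[_ ht].
  by rewrite coef_vpoly vget_row ht mulrC.
have [c [szc Yc]] := span_hs hn gmon gdiv size_g (size_poly _ _) Horth.
have cFq : forall i, Fq c`_i.
  apply: (Fq_div hq (A := hstar n g) (C := vpoly y)).
  - exact: (hs_nz hn gmon gdiv size_g).
  - by rewrite mulrC; exact: esym Yc.
  - exact: hs_Fq.
  - by move=> i; rewrite coef_vpoly.
exists (fun i : 'I_k => - c`_i); split; first by move=> i; apply: (inFqN hq).
apply: (Psi_inj hq hcard hd).
rewrite (Psi_sum beta hq ws (fun i => inFqN hq (cFq i))).
under eq_bigr => i _ do rewrite hws.
have ey : y = \sum_(i < k) c`_i *: iter i (@sigma L N) V.
  apply: vget_eq => t ht; rewrite vget_sum.
  under eq_bigr => i _ do rewrite vgetZ (iter_Vh hn gmon gdiv size_g (ltn_ord i)).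
  by rewrite -coef_vpoly (_ : vpoly y = c * hstar n g) // {1}(cE szc) coef_Chs.
have -> : Psi q beta v = - tau y by rewrite /y tauK opprK.
rewrite ey tau_sum -sumrN; apply: eq_bigr => i _.
by rewrite scaleNr.
Qed.

Lemma part2 (ws : 'I_k -> 'rV[L]_n) :
  (forall i : 'I_k, Psi q beta (ws i) = target i) ->
  Fq_basis q (altdual q beta g) ws.
Proof.
move=> hws; split.
- exact: part2_dual.
- exact: part2_indep.
- exact: part2_span.
Qed.
End Main.

Unset Implicit Arguments.

Theorem theorem4p5 (L : finFieldType) (q n : nat) (beta : L) (g : {poly L}) :
  (exists p e : nat, prime p /\ q = (p ^ e.+1)%N) ->
  #|L| = (q ^ 2)%N ->
  (q ^ 2 - 1)%N.-primitive_root beta ->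
  (0 < n)%N ->
  g \is monic ->
  (forall i, inFq q g`_i) ->
  g %| 'X^(2 * n) - 1 ->
  g != 'X^(2 * n) - 1 ->
  let k := (size g).-1 in
  let target := fun i : nat => tau (iter i (@sigma L (2 * n)) (Vhstar n g)) in
  (forall i : 'I_k, exists w : 'rV[L]_n, Psi q beta w = target i) /\
  (forall ws : 'I_k -> 'rV[L]_n,
     (forall i : 'I_k, Psi q beta (ws i) = target i) ->
     Fq_basis q (altdual q beta g) ws).
Proof.
move=> [p [e [pp hqe]]] hcard hprim hn gmon gFq gdiv _ k target.
have pch : p \in [pchar L].
  apply: (card_finPcharP (n := (e.+1 * 2)%N)) => //.
  by rewrite hcard hqe -expnM.
have hq : [pchar L].-nat q by rewrite hqe pnatX (pnatE _ pp) pch.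
have q2 : (2 <= q)%N.
  rewrite hqe expnS; have := expn_gt0 p e; have := prime_gt1 pp.
  rewrite (prime_gt0 pp) /=; nia.
have hd : beta ^+ (2 * q) != beta ^+ 2.
  apply/eqP => E.
  have b0 : beta != 0.
    apply/eqP => b0; have := prim_expr_order hprim; rewrite b0 expr0n.
    rewrite (_ : (q ^ 2 - 1 == 0)%N = false); last by rewrite expnS expn1; nia.
    by move/eqP; rewrite eq_sym oner_eq0.
  have : beta ^+ (2 * q - 2) == 1.
    have : beta ^+ (2 * q - 2) * beta ^+ 2 = 1 * beta ^+ 2.
      by rewrite -exprD subnK ?mul1r //; lia.
    by move/(mulIf (expf_neq0 2 b0)) => ->.
  rewrite -(prim_order_dvd hprim) => /dvdn_leq.
  rewrite expnS expn1; nia.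
have size_g : size g = k.+1.
  by rewrite /k prednK // size_poly_gt0 monic_neq0.
split.
- by move=> i; exact: (part1 hq hcard hd hn gmon gFq gdiv size_g i).
- by move=> ws hws; exact: (part2 hq hcard hd hn gmon gFq gdiv size_g hws).
Qed.
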